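(* Let $\mathcal{B}$ be a prime Banach algebra over $\mathbb{R}$ or $\mathbb{C}$, and let $\mathcal{H}_1,\mathcal{H}_2$ be non-empty open subsets of $\mathcal{B}$. Suppose $\mathcal{B}$ admits a continuous generalized derivation $F$ associated with a derivation $d$ that is not injective, such that for every $(x,y)\in\mathcal{H}_1\times\mathcal{H}_2$ there exist positive integers $p=p(x,y)$, $q=q(x,y)$ with $$F(x^{p}\circ y^{q})+[x^{p},y^{q}]\in Z(\mathcal{B}).$$ Then $\mathcal{B}$ is commutative or $d(Z(\mathcal{B}))=\{0\}$.
   Context: $Z(\mathcal{B})$ denotes the center of $\mathcal{B}$. For $x,y\in\mathcal{B}$, $x\circ y=xy+yx$ and $[x,y]=xy-yx$. $\mathcal{B}$ is prime if $x\mathcal{B}y=\{0\}$ implies $x=0$ or $y=0$. A derivation is an additive map $d:\mathcal{B}\to\mathcal{B}$ with $d(xy)=d(x)y+xd(y)$ for all $x,y$. A generalized derivation associated with the derivation $d$ is an additive map $F:\mathcal{B}\to\mathcal{B}$ with $F(xy)=F(x)y+xd(y)$ for all $x,y\in\mathcal{B}$. *)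

(* Defs.v *)
From HB Require Import structures.
From mathcomp Require Import all_boot all_order all_algebra.
From mathcomp Require Import all_classical all_reals all_analysis.
From mathcomp Require Import complex.
Set Implicit Arguments. Unset Strict Implicit. Unset Printing Implicit Defensive.
Import Order.TTheory GRing.Theory Num.Theory.
Import numFieldNormedType.Exports.
Local Open Scope ring_scope.
Local Open Scope classical_set_scope.

Definition scalar_field (R : realType) (b : bool) : numFieldType :=
  if b then (R : numFieldType) else (R[i] : numFieldType).

Section BanachAlg.
Variables (K : numFieldType) (B : normedModType K) (mul : B -> B -> B).

Definition banach_algebra_mul : Prop :=
  (forall x y z, mul x (mul y z) = mul (mul x y) z) /\
      (forall x y z, mul (x + y) z = mul x z + mul y z) /\
      (forall x y z, mul x (y + z) = mul x y + mul x z) /\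
      (forall (k : K) x y, mul (k *: x) y = k *: mul x y) /\
      (forall (k : K) x y, mul x (k *: y) = k *: mul x y) /\
      (forall x y, `|mul x y| <= `|x| * `|y|).

Definition centerB : set B := [set z | forall x, mul z x = mul x z].

Definition jordan (x y : B) : B := mul x y + mul y x.
Definition lie (x y : B) : B := mul x y - mul y x.

Definition primeB : Prop :=
  forall x y, (forall b, mul x (mul b y) = 0) -> x = 0 \/ y = 0.

Definition additive_map (f : B -> B) : Prop := forall x y, f (x + y) = f x + f y.

Definition derivation (d : B -> B) : Prop :=
  additive_map d /\ forall x y, d (mul x y) = mul (d x) y + mul x (d y).

Definition gen_derivation (F d : B -> B) : Prop :=
  additive_map F /\ forall x y, F (mul x y) = mul (F x) y + mul x (d y).

(* x ^ p for p >= 1 (the algebra need not be unital); the value at p = 0 is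
   irrelevant and never used *)
Definition powB (x : B) (p : nat) : B := iter p.-1 (mul x) x.

Definition commutativeB : Prop := forall x y, mul x y = mul y x.
End BanachAlg.

(* Main.v *)
Require Import Defs.
From HB Require Import structures.
From mathcomp Require Import all_boot all_order all_algebra.
From mathcomp Require Import all_classical all_reals all_analysis.
From mathcomp Require Import complex.
Import Order.TTheory GRing.Theory Num.Theory.
Import numFieldNormedType.Exports.
Local Open Scope ring_scope.
Local Open Scope classical_set_scope.
Set Implicit Arguments. Unset Strict Implicit. Unset Printing Implicit Defensive.

Lemma ac6 (V : zmodType) (t1 m1 m2 a t2 x : V) :
  t1 + (m1 + m2) + (a + (t2 + x)) = a + (t2 + t1 + (m1 + (m2 + x))).
Proof. by rewrite !addrA [LHS](ACl (4*5*1*2*3*6)). Qed.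

Lemma pigeon (R : realType) (T : countType) (P : T -> R -> Prop) (a b : R) :
  a < b -> (forall s, a < s < b -> exists t, P t s) ->
  exists t, infinite_set [set s | a < s < b /\ P t s].
Proof.
move=> ab H; apply/not_existsP => fin.
have sub : [set s : R | a < s < b] `<=` \bigcup_(t in [set: T]) [set s | a < s < b /\ P t s].
  move=> s /= hs; have [t Pt] := H s hs.
  by exists t => //; split.
have c : countable [set s : R | a < s < b].
  apply: sub_countable (subset_card_le sub) _; apply: bigcup_countable; first exact: countableP.
  move=> t _; apply: finite_set_countable.
  by have := fin t; move/contrapT.
have := countable_lebesgue_measure0 c.
rewrite -set_itvoo lebesgue_measure_itv /= lte_fin ab /= => /eqP.
by rewrite -EFinB eqe subr_eq0 gt_eqF.
Qed.

Section Gen.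
Variables (R : realType) (K : numFieldType) (B : normedModType K) (mul : B -> B -> B).
Hypothesis HB : banach_algebra_mul mul.
Variable io : {rmorphism R -> K}.

Let mulA : forall x y z, mul x (mul y z) = mul (mul x y) z.
Proof. by case: HB. Qed.
Let mulDl : forall x y z, mul (x + y) z = mul x z + mul y z.
Proof. by case: HB => _ []. Qed.
Let mulDr : forall x y z, mul x (y + z) = mul x y + mul x z.
Proof. by case: HB => _ [_ []]. Qed.
Let mulZl : forall (k : K) x y, mul (k *: x) y = k *: mul x y.
Proof. by case: HB => _ [_ [_ []]]. Qed.
Let mulZr : forall (k : K) x y, mul x (k *: y) = k *: mul x y.
Proof. by case: HB => _ [_ [_ [_ []]]]. Qed.

Lemma mul0l x : mul 0 x = 0.
Proof.
have h : mul 0 x + mul 0 x = mul 0 x + 0 by rewrite -mulDl !addr0.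
exact: addrI h.
Qed.
Lemma mul0r x : mul x 0 = 0.
Proof.
have h : mul x 0 + mul x 0 = mul x 0 + 0 by rewrite -mulDr !addr0.
exact: addrI h.
Qed.
Lemma mulNl x y : mul (- x) y = - mul x y.
Proof. by apply/eqP; rewrite -addr_eq0 -mulDl addNr mul0l. Qed.
Lemma mulNr x y : mul x (- y) = - mul x y.
Proof. by apply/eqP; rewrite -addr_eq0 -mulDr addNr mul0r. Qed.
Lemma mulBl x y z : mul (x - y) z = mul x z - mul y z.
Proof. by rewrite mulDl mulNl. Qed.
Lemma mulBr x y z : mul x (y - z) = mul x y - mul x z.
Proof. by rewrite mulDr mulNr. Qed.

Notation Zs := (centerB mul).

Lemma Zs0 : Zs 0.
Proof. by move=> x; rewrite mul0l mul0r. Qed.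
Lemma ZsD a b : Zs a -> Zs b -> Zs (a + b).
Proof. by move=> ha hb x; rewrite mulDl mulDr ha hb. Qed.
Lemma ZsN a : Zs a -> Zs (- a).
Proof. by move=> ha x; rewrite mulNl mulNr ha. Qed.
Lemma ZsB a b : Zs a -> Zs b -> Zs (a - b).
Proof. by move=> ha hb; apply: ZsD => //; apply: ZsN. Qed.
Lemma ZsZ (k : K) a : Zs a -> Zs (k *: a).
Proof. by move=> ha x; rewrite mulZl mulZr ha. Qed.
Lemma ZsZV (k : K) a : k != 0 -> Zs (k *: a) -> Zs a.
Proof. by move=> k0 /(ZsZ k^-1); rewrite scalerA mulVf // scale1r. Qed.
Lemma ZsM a b : Zs a -> Zs b -> Zs (mul a b).
Proof. by move=> ha hb x; rewrite -mulA hb mulA ha -mulA. Qed.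


Fixpoint pf (n : nat) (f : R -> B) : Prop :=
  if n is n'.+1 then exists a g, pf n' g /\ forall s, f s = a + io s *: g s
  else exists a, forall s, f s = a.
Definition pflt (n : nat) (f : R -> B) : Prop :=
  if n is n'.+1 then pf n' f else forall s, f s = 0.

Lemma pf_ext n f g : (forall s, f s = g s) -> pf n f -> pf n g.
Proof.
case: n => [|n] e /=.
  by move=> [a ha]; exists a => s; rewrite -e.
by move=> [a [h [ph hh]]]; exists a, h; split => // s; rewrite -e.
Qed.

Lemma pf_const n a : pf n (fun _ => a).
Proof.
elim: n a => [|n IH] a /=; first by exists a.
by exists a, (fun _ => 0); split => // s; rewrite scaler0 addr0.
Qed.

Lemma pf_add n f g : pf n f -> pf n g -> pf n (fun s => f s + g s).
Proof.
elim: n f g => [|n IH] f g /=.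
  by move=> [a ha] [b hb]; exists (a + b) => s; rewrite ha hb.
move=> [a [f' [pf' hf]]] [b [g' [pg' hg]]].
exists (a + b), (fun s => f' s + g' s); split; first exact: IH.
by move=> s; rewrite hf hg scalerDr addrACA.
Qed.

Lemma pf_lin n (L : B -> B) : (forall x y, L (x + y) = L x + L y) ->
  (forall s x, L (io s *: x) = io s *: L x) ->
  forall f, pf n f -> pf n (fun s => L (f s)).
Proof.
move=> LD LZ; elim: n => [|n IH] f /=.
  by move=> [a ha]; exists (L a) => s; rewrite ha.
move=> [a [g [pg hf]]]; exists (L a), (fun s => L (g s)); split; first exact: IH.
by move=> s; rewrite hf LD LZ.
Qed.

Lemma pf_X n f : pf n f -> pf n.+1 (fun s => io s *: f s).
Proof. by move=> h; exists 0, f; split => // s; rewrite add0r. Qed.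

Lemma pf_S n f : pf n f -> pf n.+1 f.
Proof.
elim: n f => [|n IH] f /=.
  by move=> [a ha]; exists a, (fun _ => 0); split; [exists 0|move=> s; rewrite ha scaler0 addr0].
by move=> [a [g [pg hf]]]; exists a, g; split => //; exact: IH.
Qed.

Lemma pf_mono n m f : (n <= m)%N -> pf n f -> pf m f.
Proof.
move=> /subnK <-; elim: (m - n)%N => [|k IH] //= pn.
by apply: pf_S; exact: IH.
Qed.

Lemma pf_mon n a : pf n (fun s => io s ^+ n *: a).
Proof.
elim: n => [|n IH] /=.
  by exists a => s; rewrite expr0 scale1r.
by exists 0, (fun s => io s ^+ n *: a); split => // s; rewrite add0r scalerA -exprS.
Qed.

Lemma pflt_pf n f : pflt n f -> pf n f.
Proof.
case: n => [|n] /=; last exact: pf_S.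
by move=> h; exists 0.
Qed.

Lemma pflt_mono n m f : (n <= m)%N -> pflt n f -> pflt m f.
Proof.
case: n => [|n]; case: m => [|m] //=.
  by move=> _ h; apply: (@pf_ext _ (fun _ => 0)) => //; exact: pf_const.
by move=> nm; apply: pf_mono.
Qed.

Lemma pflt_add n f g : pflt n f -> pflt n g -> pflt n (fun s => f s + g s).
Proof.
case: n => [|n] /=; last exact: pf_add.
by move=> hf hg s; rewrite hf hg addr0.
Qed.

Lemma pflt_lin n (L : B -> B) : (forall x y, L (x + y) = L x + L y) ->
  (forall s x, L (io s *: x) = io s *: L x) ->
  forall f, pflt n f -> pflt n (fun s => L (f s)).
Proof.
move=> LD LZ; case: n => [|n] f /=; last exact: pf_lin.
have L0 : L 0 = 0.
  by have h := LD 0 0; rewrite addr0 in h; apply: (addrI (L 0)); rewrite -h addr0.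
by move=> h s; rewrite h.
Qed.

Lemma pflt_X n f : pflt n f -> pflt n.+1 (fun s => io s *: f s).
Proof.
case: n => [|n] /=; last exact: pf_X.
by move=> h; exists 0 => s; rewrite h scaler0.
Qed.

Lemma pf_dec n r : pf n r -> exists c r', pflt n r' /\ forall s, r s = c + io s *: r' s.
Proof.
case: n => [|n] /=.
  by move=> [a ha]; exists a, (fun _ => 0); split => // s; rewrite ha scaler0 addr0.
by move=> [a [g [pg hr]]]; exists a, g.
Qed.

Lemma pf_diff n f : pf n.+1 f -> forall s0, exists h, pf n h /\
  forall s, f s - f s0 = (io s - io s0) *: h s.
Proof.
have E (x y z : B) : (x + y) - (x + z) = y - z by rewrite opprD addrACA subrr add0r.
elim: n f => [|n IH] f [a [g [pg hf]]] s0.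
  move: pg => [b hb]; exists (fun _ => b); split; first by exists b.
  by move=> s; rewrite !hf !hb E scalerBl.
have [hg [phg ehg]] := IH g pg s0.
exists (fun s => g s + io s0 *: hg s); split.
  apply: pf_add => //; apply: pf_S.
  by apply: (@pf_lin _ (fun x => io s0 *: x)) => // [x y|s x];
    rewrite ?scalerDr // !scalerA mulrC.
move=> s; rewrite !hf E scalerDr scalerA mulrC -scalerA -ehg.
by rewrite scalerBl scalerBr addrA subrK.
Qed.

Lemma io_neq s t : s != t -> io s - io t != 0.
Proof. by move=> st; rewrite subr_eq0; apply: contra st => /eqP /fmorph_inj ->. Qed.

Lemma polyZ n : forall f (S : set R), pf n f -> infinite_set S ->
  (forall s, S s -> Zs (f s)) -> forall s, Zs (f s).
Proof.
elim: n => [|n IH] f S.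
  move=> [a ha] /infinite_setN0 [s1 S1] /(_ s1 S1); rewrite ha => ha' s.
  by rewrite ha.
move=> pfn infS ZS.
have [s0 S0] := infinite_setN0 infS.
have [h [ph eh]] := @pf_diff _ _ pfn s0.
have infS' : infinite_set (S `\ s0) by apply: infinite_setD => //; exact: finite_set1.
have Zh : forall s, Zs (h s).
  apply: (IH h (S `\ s0)) => // s [Ss /eqP ns].
  apply: (@ZsZV (io s - io s0)); first exact: io_neq.
  by rewrite -eh; apply: ZsB; [apply: ZS|apply: ZS].
move=> s; have -> : f s = f s0 + (io s - io s0) *: h s by rewrite -eh addrC subrK.
by apply: ZsD; [exact: ZS|apply: ZsZ].
Qed.

Lemma LeadZ n : forall a r (S : set R), pflt n r -> infinite_set S ->
  (forall s, S s -> Zs (io s ^+ n *: a + r s)) -> Zs a.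
Proof.
elim: n => [|n IH] a r S.
  move=> /= r0 /infinite_setN0 [s1 S1] /(_ s1 S1).
  by rewrite r0 addr0 expr0 scale1r.
move=> pr infS ZS.
have pfn : pf n.+1 (fun s => io s ^+ n.+1 *: a + r s).
  by apply: pf_add; [exact: pf_mon|exact: pf_S].
have Zall := polyZ pfn infS ZS.
have [c [r' [pr' er]]] := pf_dec pr.
have Zc : Zs c.
  by have := Zall 0; rewrite er rmorph0 expr0n /= !scale0r add0r addr0.
have infS' : infinite_set (S `\ 0) by apply: infinite_setD => //; exact: finite_set1.
apply: (IH a r' (S `\ 0)) => // s [_ /eqP s0].
have is0 : io s != 0 by rewrite fmorph_eq0.
apply: (@ZsZV (io s)) => //.
have := ZsB (Zall s) Zc; rewrite er addrCA addrAC subrr add0r.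
by rewrite scalerDr scalerA -exprS.
Qed.

Notation pw := (powB mul).

Lemma pwS x p : (0 < p)%N -> pw x p.+1 = mul x (pw x p).
Proof. by case: p. Qed.

Lemma pw1 x : pw x 1 = x.
Proof. by []. Qed.

Lemma Zs_pw z p : Zs z -> Zs (pw z p).
Proof.
move=> zc; rewrite /powB; elim: p.-1 => [|n IH] //=.
exact: ZsM.
Qed.

Lemma mul_pw_r z y n : Zs z -> mul y (pw z n.+1) = iter n.+1 (mul z) y.
Proof.
move=> zc; elim: n => [|n IH]; first exact: esym (zc y).
by rewrite pwS // mulA -(zc y) -mulA IH.
Qed.

Lemma mul_pw_iter z y p n : Zs z -> (0 < p)%N ->
  mul (pw z p) (iter n (mul z) y) = mul (pw z (p + n)) y.
Proof.
move=> zc p0; elim: n => [|n IH] /=; first by rewrite addn0.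
rewrite mulA (Zs_pw p zc z) -mulA IH mulA -pwS ?addnS //.
by rewrite addn_gt0 p0.
Qed.

Lemma pow1 x0 z p : Zs z -> (0 < p)%N -> exists r, pflt p r /\
  forall s, pw (x0 + io s *: z) p = io s ^+ p *: pw z p + r s.
Proof.
move=> zc; case: p => // n _; elim: n => [|n [r [pr er]]].
  by exists (fun _ => x0); split => [|s]; [exists x0|rewrite expr1 pw1 addrC].
exists (fun s => io s ^+ n.+1 *: mul x0 (pw z n.+1) +
          (mul x0 (r s) + io s *: mul z (r s))); split.
  apply: pf_add; first exact: pf_mon.
  apply: pf_add; first by apply: pf_S; apply: pf_lin => // *; rewrite ?mulDr ?mulZr.
  by apply: pf_X; apply: pf_lin => // *; rewrite ?mulDr ?mulZr.
move=> s; rewrite pwS // er mulDl !mulDr !mulZl !mulZr scalerA -exprS -pwS //.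
by rewrite addrCA -addrA.
Qed.

Lemma pow2 y z n : Zs z -> exists r, pflt n r /\
  forall s, pw (y + io s *: z) n.+1 = io s ^+ n.+1 *: pw z n.+1 +
     (io s ^+ n *: (n.+1%:R *: iter n (mul z) y) + r s).
Proof.
move=> zc; elim: n => [|n [r [pr er]]].
  by exists (fun _ => 0); split => // s; rewrite expr1 expr0 !scale1r addr0 pw1 addrC.
exists (fun s => io s ^+ n *: (n.+1%:R *: mul y (iter n (mul z) y)) +
          (mul y (r s) + io s *: mul z (r s))); split.
  apply: pf_add; first exact: pf_mon.
  apply: pf_add; first by apply: pflt_pf; apply: pflt_lin => // *; rewrite ?mulDr ?mulZr.
  have := @pflt_X n (fun s => mul z (r s)); apply.
  by apply: pflt_lin => // *; rewrite ?mulDr ?mulZr.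
move=> s; rewrite pwS // er mulDl !mulDr !mulZl !mulZr !scalerA -!exprS -pwS //.
set A := io s ^+ n.+2 *: _; set W := iter n.+1 (mul z) y.
have -> : mul z (iter n (mul z) y) = W by [].
rewrite -!scalerA -[in RHS]mulr_natl -scalerA -[n.+2]addn1 natrD scalerDl scale1r.
rewrite !scalerDr mul_pw_r // -/W scale1r.
exact: ac6.
Qed.

Lemma near_norm (v : B) (P : B -> Prop) : (\forall t \near v, P t) ->
  exists eta : K, 0 < eta /\ forall u, `|v - u| < eta -> P u.
Proof. by move/nbhs_normP => [e e0 h]; exists e; split => // u hu; apply: h. Qed.

Lemma F_hom (F : B -> B) : additive_map F -> continuous F ->
  (forall s, `|io s| = io `|s|) -> (forall s t, s <= t -> io s <= io t) ->
  (forall e : K, 0 < e -> exists d : R, 0 < d /\ io d <= e) ->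
  forall s w, F (io s *: w) = io s *: F w.
Proof.
move=> Fadd Fc hn hm hs s w.
have F0 : F 0 = 0.
  by have h := Fadd 0 0; rewrite addr0 in h; apply: (addrI (F 0)); rewrite -h addr0.
have FN x : F (- x) = - F x.
  by apply/eqP; rewrite -addr_eq0 -Fadd addNr F0.
have Fnat x n : F (x *+ n) = F x *+ n.
  by elim: n => [|n IH]; rewrite ?mulr0n ?F0 // !mulrS Fadd IH.
have Fint x (m : int) : F (x *~ m) = F x *~ m.
  by case: m => n; rewrite ?NegzE ?mulrNz ?FN Fnat.
have Frat (q : rat) x : F (ratr q *: x) = ratr q *: F x.
  have e : ratr q * (denq q)%:~R = (numq q)%:~R :> K.
    by rewrite -[in RHS]ratr_int numqE rmorphM /= ratr_int.
  have d0 : (denq q)%:~R != 0 :> K by rewrite intr_eq0 denq_neq0.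
  have h : (denq q)%:~R *: F (ratr q *: x) = (denq q)%:~R *: (ratr q *: F x).
    rewrite [LHS]scaler_int -Fint -scaler_int scalerA mulrC e.
    rewrite [RHS]scalerA mulrC e.
    by rewrite scaler_int Fint scaler_int.
  by have := congr1 (fun y => ((denq q)%:~R)^-1 *: y) h; rewrite !scalerA mulVf // mul1r !scale1r.
set v := io s *: w.
have key : forall e : K, 0 < e -> `|F v - io s *: F w| < e.
  move=> e e0.
  have e20 : 0 < e / 2 by rewrite divr_gt0.
  have [eta [eta0 Heta]] := near_norm (cvgr_dist_lt _ _ (Fc v) _ e20).
  set M := `|w| + `|F w| + 1.
  have wM : `|w| < M by rewrite /M -addrA ltrDl; exact: ltr_wpDl (normr_ge0 _) ltr01.
  have FwM : `|F w| < M by apply: ltr_pwDr ltr01 _; exact: ler_wpDl (normr_ge0 _) (lexx _).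
  have M0 : 0 < M by apply: le_lt_trans wM.
  have [d1 [d10 hd1]] := hs (eta / M) (divr_gt0 eta0 M0).
  have [d2 [d20 hd2]] := hs (e / 2 / M) (divr_gt0 e20 M0).
  have d0 : 0 < Num.min d1 d2 by rewrite lt_min d10 d20.
  set dd := Num.min d1 d2.
  have sd : s - dd < s + dd by rewrite ltrBlDr -addrA ltrDl addr_gt0.
  have [q] := rat_in_itvoo sd; rewrite in_itv /= -ltr_distlC => hq.
  set t := ratr q : R.
  have iot : io t = ratr q by rewrite /t fmorph_rat.
  set u := io t *: w.
  have Fu : F u = io t *: F w by rewrite /u iot Frat.
  have dst : io `|s - t| <= io d1 /\ io `|s - t| <= io d2.
    by split; apply: hm; apply: (le_trans (ltW hq)); rewrite ge_min lexx ?orbT.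
  have h1 : `|F v - F u| < e / 2.
    apply: Heta; rewrite /v /u -scalerBl -rmorphB normrZ hn.
    apply: (le_lt_trans (y := eta / M * `|w|)).
      by apply: ler_wpM2r => //; apply: le_trans hd1; case: dst.
    by rewrite -ltr_pdivlMl ?divr_gt0 // invf_div divfK ?gt_eqF.
  have h2 : `|F u - io s *: F w| < e / 2.
    rewrite Fu -scalerBl -rmorphB normrZ hn distrC.
    apply: (le_lt_trans (y := e / 2 / M * `|F w|)).
      by apply: ler_wpM2r => //; apply: le_trans hd2; case: dst.
    by rewrite -ltr_pdivlMl ?divr_gt0 // invf_div divfK ?gt_eqF.
  have -> : F v - io s *: F w = (F v - F u) + (F u - io s *: F w) by rewrite addrA subrK.
  apply: (le_lt_trans (ler_normD _ _)).
  by rewrite [e]splitr ltrD.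
apply/eqP; rewrite -subr_eq0; apply/negPn/negP => nz.
have nz0 : 0 < `|F v - io s *: F w| by rewrite normr_gt0.
by have := key _ nz0; rewrite ltxx.
Qed.

Lemma open_line (H : set B) y w :
  (forall s, `|io s| = io `|s|) -> (forall s t, s <= t -> io s <= io t) ->
  (forall e : K, 0 < e -> exists d : R, 0 < d /\ io d <= e) ->
  open H -> H y -> exists dd : R, 0 < dd /\ forall s, 0 < s < dd -> H (y + io s *: w).
Proof.
move=> hn hm hs oH Hy.
have [eta [eta0 Heta]] := near_norm (open_nbhs_nbhs (conj oH Hy)).
set M := `|w| + 1.
have wM : `|w| < M by rewrite /M ltrDl.
have M0 : 0 < M by apply: le_lt_trans wM.
have [dd [dd0 hdd]] := hs (eta / M) (divr_gt0 eta0 M0).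
exists dd; split => // s /andP [s0 sd]; apply: Heta.
rewrite opprD addrA subrr add0r normrN normrZ hn.
apply: (le_lt_trans (y := eta / M * `|w|)).
  apply: ler_wpM2r => //; apply: le_trans hdd; apply: hm.
  by rewrite gtr0_norm // ltW.
by rewrite -ltr_pdivlMl ?divr_gt0 // invf_div divfK ?gt_eqF.
Qed.

Lemma add_nat (L : B -> B) : additive_map L -> forall x n, L (x *+ n) = L x *+ n.
Proof.
move=> LD x; have L0 : L 0 = 0.
  by have h := LD 0 0; rewrite addr0 in h; apply: (addrI (L 0)); rewrite -h addr0.
by elim => [|n IH]; rewrite ?mulr0n ?L0 // !mulrS LD IH.
Qed.

Lemma nzd u w : primeB mul -> Zs u -> u != 0 -> mul u w = 0 -> w = 0.
Proof.
move=> pr uc u0 uw; case: (pr u w) => [b|h|//].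
  by rewrite mulA uc -mulA uw mul0r.
by move: u0; rewrite h eqxx.
Qed.

Lemma pw_neq0 z m : primeB mul -> Zs z -> z != 0 -> pw z m != 0.
Proof.
move=> pr zc z0; rewrite /powB; elim: m.-1 => [|n IH] //=.
by apply/negP => /eqP /(nzd pr zc z0) /eqP; apply/negP.
Qed.

Definition Eexpr (F : B -> B) p q x y :=
  F (jordan mul (pw x p) (pw y q)) + lie mul (pw x p) (pw y q).

Lemma main_gen (F d : B -> B) (H1 H2 : set B) :
  primeB mul -> H1 !=set0 -> H2 !=set0 ->
  derivation mul d -> gen_derivation mul F d ->
  (forall s w, F (io s *: w) = io s *: F w) ->
  (forall (H : set B) y w, (H = H1 \/ H = H2) -> H y ->
     exists dd : R, 0 < dd /\ forall s, 0 < s < dd -> H (y + io s *: w)) ->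
  (forall x y, H1 x -> H2 y ->
     exists p q : nat, (0 < p)%N /\ (0 < q)%N /\ Zs (Eexpr F p q x y)) ->
  commutativeB mul \/ (forall z, Zs z -> d z = 0).
Proof.
move=> pr [x0 H1x0] [y1 H2y1] [dadd dmul] [Fadd Fmul] Fhom line hyp.
have [|] := pselect (forall z, Zs z -> d z = 0); first by right.
move=> /existsNP [z /not_implyP [zc dz0]]; left.
have d0 : d 0 = 0.
  by have h := dadd 0 0; rewrite addr0 in h; apply: (addrI (d 0)); rewrite -h addr0.
set c := d z.
have cZ : Zs c.
  move=> x; have h : d (mul z x) = d (mul x z) by rewrite zc.
  by move: h; rewrite !dmul (zc (d x)) [X in X = _]addrC => /addrI.
have c0 : c != 0 by apply/eqP.
have z0 : z != 0 by apply/eqP => e; apply: dz0; rewrite e d0.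
have FN x : F (- x) = - F x.
  apply/eqP; rewrite -addr_eq0 -Fadd addNr.
  by have h := Fadd 0 0; rewrite addr0 in h; apply/eqP; apply: (addrI (F 0)); rewrite -h addr0.
have FB x y : F (x - y) = F x - F y by rewrite Fadd FN.
have Fhomn s n w : F (io s ^+ n *: w) = io s ^+ n *: F w by rewrite -rmorphXn Fhom.
have A1 : forall y, H2 y -> exists p q, (0 < p)%N /\ (0 < q)%N /\
    Zs (F (mul (pw z p) (pw y q))).
  move=> y H2y.
  have [dd [dd0 hl]] := line H1 x0 z (or_introl erefl) H1x0.
  have [[p q] infS] : exists pq : nat * nat, infinite_set [set s | 0 < s < dd /\
      ((0 < pq.1)%N /\ (0 < pq.2)%N /\ Zs (Eexpr F pq.1 pq.2 (x0 + io s *: z) y))].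
    apply: pigeon dd0 _ => s hs.
    by have [p [q h]] := hyp _ _ (hl s hs) H2y; exists (p, q).
  have [s1 [_ [p0 [q0 _]]]] := infinite_setN0 infS.
  exists p, q; split => //; split => //.
  have [r [pr' er]] := pow1 x0 zc p0.
  set Y := pw y q.
  pose L w := F (jordan mul w Y) + lie mul w Y.
  have LD : forall a b, L (a + b) = L a + L b.
    move=> a b; rewrite /L /jordan /lie !mulDl !mulDr opprD.
    have -> : mul a Y + mul b Y + (mul Y a + mul Y b) =
      (mul a Y + mul Y a) + (mul b Y + mul Y b) by rewrite addrACA.
    have -> : mul a Y + mul b Y + (- mul Y a - mul Y b) =
      (mul a Y - mul Y a) + (mul b Y - mul Y b) by rewrite addrACA.
    by rewrite Fadd addrACA.
  have LZ : forall s w, L (io s ^+ p *: w) = io s ^+ p *: L w.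
    move=> s w; rewrite /L /jordan /lie mulZl mulZr -scalerDr Fhomn.
    by rewrite -scalerBr -scalerDr.
  have LZ1 : forall s w, L (io s *: w) = io s *: L w.
    by move=> s w; rewrite /L /jordan /lie mulZl mulZr -scalerDr Fhom -scalerBr -scalerDr.
  have ZL : Zs (L (pw z p)).
    apply: (LeadZ (r := fun s => L (r s)) _ infS).
      exact: pflt_lin LD LZ1 _ pr'.
    move=> s [_ [_ [_ hs]]]; move: hs; rewrite /Eexpr -/Y -/(L _) er LD LZ.
    by [].
  move: ZL; rewrite /L /jordan /lie -(Zs_pw p zc Y) subrr addr0 Fadd -mulr2n -scaler_nat.
  by apply: ZsZV; rewrite pnatr_eq0.
have A2 : forall y, H2 y -> exists m, (0 < m)%N /\ Zs (F (mul (pw z m) y)).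
  move=> y H2y.
  have [dd [dd0 hl]] := line H2 y z (or_intror erefl) H2y.
  have [[p q] infS] : exists pq : nat * nat, infinite_set [set s | 0 < s < dd /\
      ((0 < pq.1)%N /\ (0 < pq.2)%N /\ Zs (F (mul (pw z pq.1) (pw (y + io s *: z) pq.2))))].
    apply: pigeon dd0 _ => s hs.
    by have [p [q h]] := A1 _ (hl s hs); exists (p, q).
  case: q infS => [|n] infS; first by have [s1 [_ [_ [//]]]] := infinite_setN0 infS.
  have [s1 [_ [p0 _]]] := infinite_setN0 infS.
  have [r [pr' er]] := pow2 y n zc.
  pose L w := F (mul (pw z p) w).
  have LD : forall a b, L (a + b) = L a + L b by move=> a b; rewrite /L mulDr Fadd.
  have LZ1 : forall s w, L (io s *: w) = io s *: L w by move=> s w; rewrite /L mulZr Fhom.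
  have LZ : forall k s w, L (io s ^+ k *: w) = io s ^+ k *: L w.
    by move=> k s w; rewrite -rmorphXn LZ1.
  have LN : forall w k, L (w *+ k) = L w *+ k by apply: add_nat.
  have Zs_all : forall s, [set s | 0 < s < dd /\ ((0 < (p, n.+1).1)%N /\ (0 < (p, n.+1).2)%N /\
      Zs (F (mul (pw z (p, n.+1).1) (pw (y + io s *: z) (p, n.+1).2))))] s ->
      Zs (io s ^+ n.+1 *: L (pw z n.+1) +
         (io s ^+ n *: L (n.+1%:R *: iter n (mul z) y) + L (r s))).
    move=> s [_ [_ [_ hs]]]; move: hs; rewrite /= -/(L _) er !LD !LZ.
    by [].
  have ZA : Zs (L (pw z n.+1)).
    apply: (LeadZ (r := fun s => io s ^+ n *: L (n.+1%:R *: iter n (mul z) y) + L (r s))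
      _ infS); last exact: Zs_all.
    rewrite /=; apply: pf_add; first exact: pf_mon.
    by apply: pflt_pf; apply: pflt_lin LD LZ1 _ pr'.
  have ZC : Zs (L (n.+1%:R *: iter n (mul z) y)).
    apply: (LeadZ (r := fun s => L (r s)) _ infS).
      exact: pflt_lin LD LZ1 _ pr'.
    move=> s hs; have := ZsB (Zs_all s hs) (ZsZ (io s ^+ n.+1) ZA).
    by rewrite addrAC subrr add0r.
  exists (p + n)%N; split; first by rewrite addn_gt0 p0.
  move: ZC; rewrite scaler_nat LN -scaler_nat => /ZsZV; rewrite pnatr_eq0 => /(_ isT).
  by rewrite /L mul_pw_iter.
have A3 : forall y0, H2 y0 -> Zs y0.
  move=> y0 H2y0.
  have [dd [dd0 hl]] := line H2 y0 (mul y0 z) (or_intror erefl) H2y0.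
  have [m infS] : exists m : nat, infinite_set [set s | 0 < s < dd /\
      ((0 < m)%N /\ Zs (F (mul (pw z m) (y0 + io s *: mul y0 z))))].
    by apply: pigeon dd0 _ => s hs; apply: A2; apply: hl.
  have [s1 S1] := infinite_setN0 infS.
  have infS' : infinite_set ([set s | 0 < s < dd /\
      ((0 < m)%N /\ Zs (F (mul (pw z m) (y0 + io s *: mul y0 z))))] `\ s1).
    by apply: infinite_setD => //; exact: finite_set1.
  have [s2 [S2 /eqP s21]] := infinite_setN0 infS'.
  pose G w := F (mul (pw z m) w).
  have GD : forall a b, G (a + b) = G a + G b by move=> a b; rewrite /G mulDr Fadd.
  have GZ : forall s w, G (io s *: w) = io s *: G w by move=> s w; rewrite /G mulZr Fhom.
  move: S1 S2 => [_ [m0 Z1]] [_ [_ Z2]].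
  rewrite -/(G _) GD GZ in Z1; rewrite -/(G _) GD GZ in Z2.
  have ZG1 : Zs (G (mul y0 z)).
    apply: (@ZsZV (io s2 - io s1)); first exact: io_neq.
    by have := ZsB Z2 Z1; rewrite opprD addrACA subrr add0r scalerBl.
  have ZG0 : Zs (G y0).
    by have := ZsB Z1 (ZsZ (io s1) ZG1); rewrite addrK.
  set zm := pw z m.
  have zmc : Zs zm := Zs_pw m zc.
  have zm0 : zm != 0 := pw_neq0 m pr zc z0.
  set e := mul zm c.
  have ec : Zs e := ZsM zmc cZ.
  have e0 : e != 0.
    by apply/eqP => /(nzd pr zmc zm0) /eqP; apply/negP.
  have Zey : Zs (mul e y0).
    have h : G (mul y0 z) = mul (G y0) z + mul e y0.
      by rewrite /G mulA Fmul /e -mulA -(cZ y0) mulA.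
    by have := ZsB ZG1 (ZsM ZG0 zc); rewrite h addrC addKr.
  move=> r; apply/eqP; rewrite -subr_eq0; apply/eqP.
  apply: (nzd pr ec e0).
  by rewrite mulBr !mulA (ec r) -(mulA r) Zey subrr.
move=> x w.
have [dd [dd0 hl]] := line H2 y1 w (or_intror erefl) H2y1.
have hs : 0 < dd / 2 < dd by rewrite divr_gt0 // ltr_pdivrMr // ltr_pMr // ltr1n.
have Zw : Zs w.
  apply: (@ZsZV (io (dd / 2))); first by rewrite fmorph_eq0 gt_eqF // divr_gt0.
  by have := ZsB (A3 _ (hl _ hs)) (A3 _ H2y1); rewrite addrC addKr.
exact: esym (Zw x).
Qed.
End Gen.
Lemma iota_ok (R : realType) (b : bool) :
  exists io : {rmorphism R -> scalar_field R b},
  [/\ (forall s, `|io s| = io `|s|), (forall s t, s <= t -> io s <= io t) &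
      (forall e, 0 < e -> exists d : R, 0 < d /\ io d <= e)].
Proof.
case: b => /=.
  exists idfun; split => //= e e0; by exists e.
exists (real_complex R); split => /=.
- by move=> s; rewrite normc_def /= expr0n /= addr0 sqrtr_sqr.
- by move=> s t; rewrite lecR.
- move=> e; rewrite ltcE /= => /andP [/eqP e0 e1].
  exists (complex.Re e); split => //; by rewrite lecE /= e0 eqxx lexx.
Qed.

Unset Implicit Arguments.
Set Strict Implicit.

Theorem theorem3p2 (R : realType) (b : bool)
    (B : completeNormedModType (scalar_field R b)) (mul : B -> B -> B)
    (H1 H2 : set B) (F d : B -> B) :
  banach_algebra_mul mul ->
  primeB mul ->
  open H1 -> H1 !=set0 -> open H2 -> H2 !=set0 ->
  derivation mul d -> gen_derivation mul F d ->
  continuous F ->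
  ~ injective d ->
  (forall x y, H1 x -> H2 y ->
     exists p q : nat, (0 < p)%N /\ (0 < q)%N /\
       centerB mul (F (jordan mul (powB mul x p) (powB mul y q))
                    + lie mul (powB mul x p) (powB mul y q))) ->
  commutativeB mul \/ (forall z, centerB mul z -> d z = 0).
Proof.
move=> HB pr oH1 nH1 oH2 nH2 dder Fg Fc _ hyp.
have [io [hn hm hs]] := iota_ok R b.
have Fhom := F_hom (io := io) (proj1 Fg) Fc hn hm hs.
apply: (main_gen HB (io := io) pr nH1 nH2 dder Fg Fhom) => //.
by move=> H y w [->|->] Hy; apply: open_line.
Qed.
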